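(* Let $\mathcal{N}=\{1,\dots,N\}$ be a finite set of blocks with centers $\bm{r}_n\in\mathbb{R}^3$, $\mathcal{I}=\{1,\dots,I\}$ a finite set of users, $\gamma_{n,n'}=\|\bm{r}_n-\bm{r}_{n'}\|$. Fix a phase shift vector $\bm{c}$, pairwise distinct real numbers $\mu_1,\dots,\mu_N$ (the mean RSS values $\mu_n=\mu_n(\bm{c})$), $\sigma>0$, and for each user $i$ prior probabilities $p_{i,n}>0$ with $\sum_{n}p_{i,n}=1$. Let $\mathbb{P}(s\mid\bm{c},n)=\frac{1}{\sqrt{2\pi\sigma^2}}e^{-(s-\mu_n)^2/(2\sigma^2)}$. For a decision function $\mathcal{L}$ (a map $(i,n',s_i)\mapsto\mathcal{L}(n'\mid\bm{c},s_i,\{p_{i,n}\})\in\{0,1\}$ with $\sum_{n'}\mathcal{L}(n'\mid\bm{c},s_i,\{p_{i,n}\})=1$ for all $i,s_i$) let $$l(\bm{c},\mathcal{L})=\sum_{i\in\mathcal{I}}\sum_{\substack{n,n'\in\mathcal{N}\\ n\neq n'}}p_{i,n}\gamma_{n,n'}\int_{\mathbb{R}}\mathbb{P}(s_i\mid\bm{c},n)\,\mathcal{L}(n'\mid\bm{c},s_i,\{p_{i,n}\})\,ds_i,$$ and let $\mathcal{L}^*$ be a decision function minimizing $l(\bm{c},\cdot)$ (so $l(\bm{c},\mathcal{L}^* )=\inf_{\mathcal{L}}l(\bm{c},\mathcal{L})$). Define $$d_{i,n,n'}=\frac{(\mu_{n'}-\mu_n)^2-2\sigma^2\ln\frac{p_{i,n'}}{p_{i,n}}}{2\sigma|\mu_{n'}-\mu_n|},\qquad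 l_a(\bm{c})=\sum_{i\in\mathcal{I}}\sum_{\substack{n,n'\in\mathcal{N}\\ n\neq n'}}p_{i,n}\gamma_{n,n'}\,Q(d_{i,n,n'}),$$ where $Q(x)=\frac{1}{\sqrt{2\pi}}\int_x^\infty e^{-t^2/2}dt$ is the Gaussian Q function. Then $l_a(\bm{c})\ge l(\bm{c},\mathcal{L}^* )$.
   Context: This models RSS-based localization: the RSS measured by a user in block $n$ under phase shift vector $\bm{c}$ is Gaussian with mean $\mu_n(\bm{c})$ and variance $\sigma^2$; $p_{i,n}$ is the prior probability that user $i$ is in block $n$; $\gamma_{n,n'}$ is the loss of estimating block $n'$ when the true block is $n$. *)

(* Defs.v *)
From HB Require Import structures.
From mathcomp Require Import all_boot all_order all_algebra.
From mathcomp Require Import all_classical all_reals all_analysis.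
Set Implicit Arguments. Unset Strict Implicit. Unset Printing Implicit Defensive.
Import Order.TTheory GRing.Theory Num.Def Num.Theory.
Import numFieldTopology.Exports.
Local Open Scope classical_set_scope.
Local Open Scope ring_scope.

Section defs.
Variable R : realType.

Definition eucl_dist (x y : 'rV[R]_3) : R :=
  Num.sqrt (\sum_(k < 3) (x 0 k - y 0 k) ^+ 2).

Definition gaussQ (x : R) : \bar R :=
  ((Num.sqrt (pi *+ 2))^-1)%:E *
  \int[lebesgue_measure]_(t in `[x, +oo[%classic) (expR (- (t ^+ 2) / 2))%:E.

(* decision function: L i n' s in {0,1}, summing to 1 over n', and
   measurable in s (so the integrals in the loss are meaningful) *)
Definition decision_fun (I N : nat) (L : 'I_I -> 'I_N -> R -> R) : Prop :=
  (forall i n' s, L i n' s = 0 \/ L i n' s = 1) /\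
  (forall i s, \sum_(n' < N) L i n' s = 1) /\
  (forall i n', measurable_fun [set: R] (L i n')).

(* expected localization loss l(c, L); mu n = mu_n(c), sigma = std dev *)
Definition loc_loss (I N : nat) (r : 'I_N -> 'rV[R]_3) (mu : 'I_N -> R)
  (sigma : R) (p : 'I_I -> 'I_N -> R) (L : 'I_I -> 'I_N -> R -> R) : \bar R :=
  (\sum_(i < I) \sum_(n < N) \sum_(n' < N | n != n')
     (p i n * eucl_dist (r n) (r n'))%:E *
     \int[lebesgue_measure]_(s in [set: R])
        (normal_pdf (mu n) sigma s * L i n' s)%:E)%E.

Definition d_coef (I N : nat) (mu : 'I_N -> R) (sigma : R)
  (p : 'I_I -> 'I_N -> R) (i : 'I_I) (n n' : 'I_N) : R :=
  ((mu n' - mu n) ^+ 2 - 2 * sigma ^+ 2 * ln (p i n' / p i n)) /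
  (2 * sigma * `|mu n' - mu n|).

Definition approx_loss (I N : nat) (r : 'I_N -> 'rV[R]_3) (mu : 'I_N -> R)
  (sigma : R) (p : 'I_I -> 'I_N -> R) : \bar R :=
  (\sum_(i < I) \sum_(n < N) \sum_(n' < N | n != n')
     (p i n * eucl_dist (r n) (r n'))%:E * gaussQ (d_coef mu sigma p i n n'))%E.

End defs.

(* Main.v *)
Require Import Defs.
From HB Require Import structures.
From mathcomp Require Import all_boot all_order all_algebra.
From mathcomp Require Import all_classical all_reals all_analysis.
From mathcomp Require Import measurable_realfun.
From mathcomp Require Import ring lra.
Import Order.TTheory GRing.Theory Num.Def Num.Theory.
Import numFieldTopology.Exports.
Local Open Scope classical_set_scope.
Local Open Scope ring_scope.

Section gq.
Variable R : realType.
Notation mu := (@lebesgue_measure R).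

Lemma gaussQ_int (m s x : R) : 0 < s ->
  (\int[mu]_(t in `[(m + s * x)%R, +oo[) (normal_pdf m s t)%:E)%E = gaussQ x.
Proof.
move=> s0.
pose c := (Num.sqrt (pi *+ 2 : R))^-1.
pose F := fun t : R^o => (t - m) / s.
pose G := fun t : R => c * expR (- (t ^+ 2) / 2).
have F'E : F^`()%classic = cst s^-1.
  apply/funext => y; rewrite /F derive1E deriveM// deriveD// derive_cst scaler0.
  by rewrite add0r derive_id derive_cst addr0 scaler1.
have Fa : F (m + s * x) = x by rewrite /F addrC addKr mulrC mulKf ?gt_eqF.
rewrite /gaussQ -ge0_integralZl//=.
all: try (by move=> y _; rewrite lee_fin expR_ge0).
all: try (by rewrite lee_fin invr_ge0 sqrtr_ge0).
2: by apply/measurable_EFinP; apply: measurableT_comp => //; apply: measurable_funM => //;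
     apply: measurableT_comp => //; exact: measurable_funX.
transitivity (\int[mu]_(t in `[F (m + s * x)%R, +oo[) (G t)%:E)%E; last first.
  by rewrite Fa; apply: eq_integral => y _; rewrite EFinM.
rewrite (@increasing_ge0_integration_by_substitutiony _ F G); last 8 first.
- move=> y z _ _ yz; rewrite /F ltr_pM2r ?invr_gt0// ltrBlDr subrK //.
- by rewrite F'E => ? _; exact: cst_continuous.
- by rewrite F'E; exact: is_cvg_cst.
- by rewrite F'E; exact: is_cvg_cst.
- split.
    by move=> y _; rewrite /F.
  apply: cvg_at_right_filter; rewrite /F.
  have cF : continuous (fun t : R => (t - m) / s).
    move=> t; apply: cvgMr_tmp; apply: cvgB; [exact: cvg_id|exact: cvg_cst].
  exact: cF.
- by rewrite /F; apply/gt0_cvgMly; [rewrite invr_gt0|exact: cvg_addrr].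
- apply: continuous_subspaceT => t.
  apply: cvgM; first exact: cvg_cst.
  apply: (cvg_comp _ expR); last exact: continuous_expR.
  apply: cvgM; last exact: cvg_cst.
  apply: (@cvgN _ R^o).
  exact: sqr_continuous.
- by move=> y _; rewrite /G mulr_ge0 ?invr_ge0 ?sqrtr_ge0 ?expR_ge0.
apply: eq_integral => y _; congr EFin.
rewrite F'E /G /F /= /normal_pdf gt_eqF //.
rewrite /normal_peak /normal_fun /= /c.
have -> : Num.sqrt (s ^+ 2 * pi *+ 2) = s * Num.sqrt (pi *+ 2).
  by rewrite -mulrnAr sqrtrM ?sqr_ge0 // sqrtr_sqr gtr0_norm.
have -> : - (y - m) ^+ 2 / (s ^+ 2 *+ 2) = - ((y - m) / s) ^+ 2 / 2.
  by field; rewrite gt_eqF.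
rewrite invfM; set e := expR _.
rewrite /= -/e.
rewrite mulrfctE /= -/e.
ring.
Qed.

Lemma normal_pdfN (m s t : R) : 0 < s -> normal_pdf m s (- t) = normal_pdf (- m) s t.
Proof.
move=> s0; rewrite /normal_pdf gt_eqF //.
rewrite /normal_fun -sqrrN opprB !opprK addrC.
done.
Qed.

Lemma gaussQ_intN (m s x : R) : 0 < s ->
  (\int[mu]_(t in `]-oo, (m - s * x)%R]) (normal_pdf m s t)%:E)%E = gaussQ x.
Proof.
move=> s0.
have -> : (m - s * x = - (s * x - m))%R by ring.
rewrite ge0_integration_by_substitutionNy; last 2 first.
- by apply: continuous_subspaceT; apply: continuous_normal_pdf; rewrite gt_eqF.
- by move=> y _; apply: normal_pdf_ge0.
transitivity (\int[mu]_(t in `[(- m + s * x)%R, +oo[) (normal_pdf (- m) s t)%:E)%E.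
  have -> : (- m + s * x = s * x - m)%R by ring.
  by apply: eq_integral => y _; rewrite /= normal_pdfN.
exact: gaussQ_int.
Qed.
End gq.

Section mapdec.
Variables (R : realType) (I N : nat) (mu : 'I_N -> R) (sigma : R) (p : 'I_I -> 'I_N -> R).
Hypothesis sigma_gt0 : 0 < sigma.
Hypothesis p_gt0 : forall i n, 0 < p i n.

Definition gf i m s := p i m * normal_pdf (mu m) sigma s.
Definition cnd i n' m s : bool :=
  if (nat_of_ord m < nat_of_ord n')%N then gf i m s < gf i n' s else gf i m s <= gf i n' s.
Definition Lmap i n' s : R := if [forall m, cnd i n' m s] then 1 else 0.

Lemma prod_if (c : 'I_N -> bool) :
  \prod_(m < N) (if c m then 1 else 0 : R) = if [forall m, c m] then 1 else 0.
Proof.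
case: forallP => H; first by apply: big1 => m _; rewrite H.
have [m Hm] : exists m, ~~ c m.
  apply/existsP; apply: contraT; rewrite negb_exists => /forallP H'.
  by exfalso; apply: H => m; have := H' m; rewrite negbK.
by rewrite (bigD1 m) //= (negbTE Hm) mul0r.
Qed.

Lemma measurable_Lmap i n' : measurable_fun [set: R] (Lmap i n').
Proof.
have -> : Lmap i n' = fun s => \prod_(m < N) (if cnd i n' m s then 1 else 0 : R).
  by apply/funext => s; rewrite prod_if.
apply: measurable_prod => m _.
have mg : forall k, measurable_fun [set: R] (gf i k).
  by move=> k; apply: measurable_funM => //; exact: measurable_normal_pdf.
apply: measurable_fun_if => //.
rewrite /cnd; case: (_ < _)%N.
  exact: measurable_fun_ltr.
exact: measurable_fun_ler.
Qed.

Lemma Lmap01 i n' s : Lmap i n' s = 0 \/ Lmap i n' s = 1.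
Proof. by rewrite /Lmap; case: ifP => _; [right|left]. Qed.

Lemma cnd_le i n' m s : cnd i n' m s -> gf i m s <= gf i n' s.
Proof. by rewrite /cnd; case: ifP => // _ /ltW. Qed.

Lemma sum_Lmap i s : (0 < N)%N -> \sum_(n' < N) Lmap i n' s = 1.
Proof.
move=> N0.
pose P k := [exists j : 'I_N, (nat_of_ord j == k) && [forall m, gf i m s <= gf i j s]].
have exP : exists k, P k.
  pose n0 := Ordinal N0.
  pose j := Order.arg_max n0 xpredT (fun k => gf i k s).
  exists (nat_of_ord j); apply/existsP; exists j; rewrite eqxx /=.
  apply/forallP => m; rewrite /j.
  by case: Order.TotalTheory.arg_maxP => // k _ Hk; apply: Hk.
case: (ex_minnP exP) => k /existsP [j /andP [/eqP jk /forallP jmax]] kmin.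
have cj : [forall m, cnd i j m s].
  apply/forallP => m; rewrite /cnd; case: ifP => mj; last exact: jmax.
  rewrite lt_neqAle jmax andbT; apply/negP => /eqP gmj.
  have : P m by apply/existsP; exists m; rewrite eqxx /=; apply/forallP => m'; rewrite gmj.
  by move/kmin; rewrite -jk leqNgt mj.
rewrite (bigD1 j) //= /Lmap cj big1 ?addr0 // => k' k'j.
case: forallP => // Hk'; exfalso.
have [lt|gt] : (nat_of_ord j < k')%N \/ (k' < j)%N.
  by case: ltngtP => //; [left|right|move/val_inj => E; rewrite E eqxx in k'j].
- have := Hk' j; rewrite /cnd lt; move/lt_le_trans => /(_ _ (jmax k')).
  by rewrite ltxx.
- have := cj; move/forallP => /(_ k'); rewrite /cnd gt => lt1.
  have := Hk' j; rewrite /cnd ltnNge (ltnW gt) /= => le1.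
  by have := lt_le_trans lt1 le1; rewrite ltxx.
Qed.

End mapdec.

Lemma keyineq {R : realType} (a b sg pa pb s : R) : 0 < sg -> 0 < pa -> 0 < pb ->
  pa * normal_pdf a sg s <= pb * normal_pdf b sg s ->
  (b - a) ^+ 2 - 2 * sg ^+ 2 * ln (pb / pa) <= 2 * (b - a) * (s - a).
Proof.
move=> sg0 pa0 pb0.
rewrite /normal_pdf gt_eqF // /normal_fun.
have P0 : 0 < normal_peak sg := normal_peak_gt0 (lt0r_neq0 sg0).
rewrite mulrCA [pb * _]mulrCA ler_pM2l //.
rewrite -ler_ln ?posrE ?mulr_gt0 ?expR_gt0 // => H.
rewrite (lnM (x:=pa)) ?(lnM (x:=pb)) ?posrE ?expR_gt0 // !expRK in H.
rewrite (lnM (x:=pb)) ?posrE ?invr_gt0 // (lnV (x:=pa)) ?posrE //.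
have K0 : 0 < sg ^+ 2 *+ 2 by rewrite pmulrn_lgt0 // exprn_gt0.
set K := sg ^+ 2 *+ 2 in H K0.
have H' : ((s - b) ^+ 2 - (s - a) ^+ 2) / K <= ln pb - ln pa.
  rewrite mulrBl; move: H; rewrite !mulNr; lra.
rewrite ler_pdivrMr // in H'.
have -> : 2 * sg ^+ 2 = K by rewrite /K mulr_natl.
nra.
Qed.

Definition ddf {R : realType} (a b sg pa pb : R) :=
  ((b - a) ^+ 2 - 2 * sg ^+ 2 * ln (pb / pa)) / (2 * sg * `|b - a|).

Lemma halfline (R : realType) (a b sg pa pb s : R) : 0 < sg -> 0 < pa -> 0 < pb ->
  pa * normal_pdf a sg s <= pb * normal_pdf b sg s ->
  (a < b -> a + sg * ddf a b sg pa pb <= s) /\ (b < a -> s <= a - sg * ddf a b sg pa pb).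
Proof.
move=> sg0 pa0 pb0 H; have := keyineq a b sg pa pb s sg0 pa0 pb0 H.
rewrite /ddf; set D := (_ - _ * ln _) => h.
split => ab.
- have ba0 : 0 < b - a by rewrite subr_gt0.
  rewrite gtr0_norm //.
  set w := D / (2 * (b - a)).
  have Hw : sg * (D / (2 * sg * (b - a))) = w.
    rewrite /w; field; rewrite ?mulf_neq0 ?gt_eqF //.
  have HD : D = w * (2 * (b - a)).
    rewrite /w; field; rewrite ?mulf_neq0 ?gt_eqF //.
  rewrite Hw; rewrite HD in h; nra.
- have ba0 : b - a < 0 by rewrite subr_lt0.
  rewrite ltr0_norm //.
  set w := D / (2 * (b - a)).
  have Hw : sg * (D / (2 * sg * - (b - a))) = - w.
    by rewrite /w; field; rewrite lt_eqF ?gt_eqF.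
  have HD : D = w * (2 * (b - a)).
    rewrite /w; field; rewrite ?mulf_neq0 ?lt_eqF //.
  rewrite Hw; rewrite HD in h; nra.
Qed.

Lemma int_bound {R : realType} (f L : R -> R) (S : set R) :
  measurable S -> measurable_fun setT f -> measurable_fun setT L ->
  (forall s, 0 <= f s) -> (forall s, L s = 0 \/ L s = 1) -> (forall s, L s != 0 -> S s) ->
  (\int[lebesgue_measure]_(s in [set: R]) (f s * L s)%:E <=
   \int[lebesgue_measure]_(s in S) (f s)%:E)%E.
Proof.
move=> mS mf mL f0 HL LS.
rewrite [X in (_ <= X)%E]integral_mkcond.
apply: ge0_le_integral => //.
- by move=> s _; rewrite lee_fin; case: (HL s) => ->; rewrite ?mulr0 ?mulr1.
- by apply/measurable_EFinP; exact: measurable_funM.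
- apply/(measurable_restrictT _ _).1 => //.
  apply/measurable_EFinP; exact: measurable_funS mf.
- move=> s _; rewrite patchE; case: (HL s) => HLs; rewrite HLs ?mulr0 ?mulr1.
    by case: ifPn => _ //=; rewrite lee_fin.
  have -> : s \in S by apply: mem_set; apply: LS; rewrite HLs oner_eq0.
  by [].
Qed.

Theorem proposition2 (R : realType) (I N : nat) (r : 'I_N -> 'rV[R]_3)
  (mu : 'I_N -> R) (sigma : R) (p : 'I_I -> 'I_N -> R)
  (mu_inj : injective mu) (sigma_gt0 : 0 < sigma)
  (p_gt0 : forall i n, 0 < p i n)
  (p_sum1 : forall i, \sum_(n < N) p i n = 1)
  (Lstar : 'I_I -> 'I_N -> R -> R)
  (Lstar_dec : decision_fun Lstar)
  (Lstar_opt : forall L, decision_fun L ->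
     (loc_loss r mu sigma p Lstar <= loc_loss r mu sigma p L)%E) :
  (loc_loss r mu sigma p Lstar <= approx_loss r mu sigma p)%E.
Proof.
have decL : decision_fun (@Lmap R I N mu sigma p).
  split; [|split].
  - exact: Lmap01.
  - move=> i s; apply: sum_Lmap.
    case: (posnP N) => [N0|//]; exfalso.
    have := p_sum1 i; subst N; rewrite big_ord0 => /eqP; rewrite eq_sym oner_eq0.
    by [].
  - move=> i n'; exact: measurable_Lmap.
apply: le_trans (Lstar_opt _ decL) _.
rewrite /loc_loss /approx_loss.
apply: lee_sum => i _; apply: lee_sum => n _; apply: lee_sum => n' nn'.
apply: lee_wpmul2l.
  by rewrite lee_fin; apply: mulr_ge0; [exact: ltW | exact: sqrtr_ge0].
have dE : d_coef mu sigma p i n n' = ddf (mu n) (mu n') sigma (p i n) (p i n') by [].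
have Hsupp : forall s, @Lmap R I N mu sigma p i n' s != 0 ->
    p i n * normal_pdf (mu n) sigma s <= p i n' * normal_pdf (mu n') sigma s.
  move=> s; rewrite /Lmap; case: ifP => [/forallP /(_ n) /cnd_le //|_].
  by rewrite eqxx.
rewrite dE.
case: (ltgtP (mu n) (mu n')) => [lt|gt|eq].
- rewrite -(@gaussQ_int R (mu n) sigma _ sigma_gt0).
  apply: int_bound => //.
  + exact: measurable_normal_pdf.
  + exact: measurable_Lmap.
  + exact: normal_pdf_ge0.
  + exact: Lmap01.
  + move=> s /Hsupp H.
    have [h _] := @halfline R (mu n) (mu n') sigma (p i n) (p i n') s sigma_gt0 (p_gt0 _ _) (p_gt0 _ _) H.
    by rewrite /= in_itv /= andbT; exact: h.
- rewrite -(@gaussQ_intN R (mu n) sigma _ sigma_gt0).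
  apply: int_bound => //.
  + exact: measurable_normal_pdf.
  + exact: measurable_Lmap.
  + exact: normal_pdf_ge0.
  + exact: Lmap01.
  + move=> s /Hsupp H.
    have [_ h] := @halfline R (mu n) (mu n') sigma (p i n) (p i n') s sigma_gt0 (p_gt0 _ _) (p_gt0 _ _) H.
    by rewrite /= in_itv /=; exact: h.
- by move/mu_inj: eq => eq; rewrite eq eqxx in nn'.
Qed.
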